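(* Let $n\ge d$, $L=\{\ell_1,\dots,\ell_n\}$, $R=\{r_1,\dots,r_d\}$. For a linkage $(n,d)$-matching field $\mathcal{M}$ on $L\sqcup R$ let $\varphi_{\mathcal{M}}\colon\binom{L}{n-d+1}\to\{v\in\mathbb{Z}_{\ge0}^d:\sum_i v_i=n-d+1\}$ send $\rho$ to the right degree vector of the Chow covector $\Omega_\rho$ of $\mathcal{M}$. If $\mathcal{M}$ and $\mathcal{M}'$ are linkage $(n,d)$-matching fields on $L\sqcup R$ with $\varphi_{\mathcal{M}}=\varphi_{\mathcal{M}'}$, then $\mathcal{M}=\mathcal{M}'$. That is, a linkage matching field is uniquely determined by its map $\varphi_{\mathcal{M}}$.
   Context: All graphs are bipartite graphs on $L\sqcup R$, identified with their edge sets; the right degree vector is $(\deg r_1,\dots,\deg r_d)$. An $(n,d)$-matching field $\mathcal{M}=(M_\sigma)$ assigns to each $d$-subset $\sigma\subseteq L$ a perfect matching $M_\sigma$ between $\sigma$ and $R$. It is linkage if for every $r_i\in R$ and every $(d+1)$-subset $\tau\subseteq L$ there exist distinct $\ell_j,\ell_{j'}\in\tau$ such that $M_{\tau\setminus\{\ell_j\}}$ and $M_{\tau\setminus\{\ell_{j'}\}}$ agree everywhere except on the edges incident with $r_i$. For an $(n-d+1)$-subset $\rho\subseteq L$, the Chow covector $\Omega_\rho$ is the graph with edges $(\ell_j,r)$ for $\ell_j\in\rho$, where $r$ is the node matched to $\ell_j$ in $M_{(L\setminus\rho)\cup\{\ell_j\}}$. *)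

(* Defs.v *)
From mathcomp Require Import all_boot.
Set Implicit Arguments. Unset Strict Implicit. Unset Printing Implicit Defensive.

(* Bipartite graphs on L ⊔ R with L = 'I_n, R = 'I_d, identified with
   their edge sets : {set 'I_n * 'I_d}. *)
Definition bgraph (n d : nat) := {set 'I_n * 'I_d}.

Definition perfect_matching n d (sigma : {set 'I_n}) (E : bgraph n d) : Prop :=
  [/\ forall e, e \in E -> e.1 \in sigma,
      forall l, l \in sigma -> #|[set r : 'I_d | (l, r) \in E]| = 1
    & forall r : 'I_d, #|[set l : 'I_n | (l, r) \in E]| = 1].

Definition matching_field n d (M : {set 'I_n} -> bgraph n d) : Prop :=
  forall sigma : {set 'I_n}, #|sigma| = d -> perfect_matching sigma (M sigma).

Definition off_node n d (r : 'I_d) (E : bgraph n d) : bgraph n d :=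
  [set e in E | e.2 != r].

Definition linkage n d (M : {set 'I_n} -> bgraph n d) : Prop :=
  forall (r : 'I_d) (tau : {set 'I_n}), #|tau| = d.+1 ->
    exists l, exists l', [/\ l \in tau, l' \in tau, l != l' &
      off_node r (M (tau :\ l)) = off_node r (M (tau :\ l'))].

Definition linkage_matching_field n d (M : {set 'I_n} -> bgraph n d) : Prop :=
  matching_field M /\ linkage M.

Definition chow_covector n d (M : {set 'I_n} -> bgraph n d) (rho : {set 'I_n})
  : bgraph n d :=
  [set e : 'I_n * 'I_d | (e.1 \in rho) && (e \in M (e.1 |: ~: rho))].

Definition right_degree n d (E : bgraph n d) : 'I_d -> nat :=
  fun r => #|[set l : 'I_n | (l, r) \in E]|.

Definition phi n d (M : {set 'I_n} -> bgraph n d) (rho : {set 'I_n}) : 'I_d -> nat :=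
  right_degree (chow_covector M rho).

(* Main.v *)
Require Import Defs.
From mathcomp Require Import all_boot.
From mathcomp Require Import zify.

Set Implicit Arguments. Unset Strict Implicit. Unset Printing Implicit Defensive.

Section PM.
Variables (n d : nat).
Implicit Types (sigma : {set 'I_n}) (E : bgraph n d).

Lemma pm_in1 sigma E e : perfect_matching sigma E -> e \in E -> e.1 \in sigma.
Proof. by case=> H1 _ _; apply: H1. Qed.

Lemma pm_runiq sigma E u v r : perfect_matching sigma E ->
  (u, r) \in E -> (v, r) \in E -> u = v.
Proof.
case=> _ _ H3 hu hv; have /cards1P [w Hw] : #|[set l | (l, r) \in E]| == 1.
  by rewrite H3.
have : u \in [set l | (l, r) \in E] by rewrite inE.
have : v \in [set l | (l, r) \in E] by rewrite inE.
by rewrite Hw !inE => /eqP -> /eqP ->.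
Qed.

Lemma pm_luniq sigma E l r r' : perfect_matching sigma E ->
  (l, r) \in E -> (l, r') \in E -> r = r'.
Proof.
move=> pm hu hv; have ls := pm_in1 pm hu; case: pm => _ H2 _.
have /cards1P [w Hw] : #|[set x | (l, x) \in E]| == 1 by rewrite H2.
have : r \in [set x | (l, x) \in E] by rewrite inE.
have : r' \in [set x | (l, x) \in E] by rewrite inE.
by rewrite Hw !inE => /eqP -> /eqP ->.
Qed.

Lemma pm_lex sigma E l : perfect_matching sigma E -> l \in sigma ->
  exists r, (l, r) \in E.
Proof.
case=> _ H2 _ ls; have /cards1P [w Hw] : #|[set x | (l, x) \in E]| == 1.
  by rewrite H2.
exists w; have : w \in [set x | (l, x) \in E] by rewrite Hw inE.
by rewrite inE.
Qed.

Lemma pm_rex sigma E r : perfect_matching sigma E -> exists l, (l, r) \in E.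
Proof.
case=> _ _ H3; have /cards1P [w Hw] : #|[set x | (x, r) \in E]| == 1.
  by rewrite H3.
exists w; have : w \in [set x | (x, r) \in E] by rewrite Hw inE.
by rewrite inE.
Qed.

End PM.

Lemma connect_pred (T : finType) (e : rel T) (P : pred T) :
  (forall u v, e u v -> P u -> P v) -> forall x y, connect e x y -> P x -> P y.
Proof.
move=> H x y /connectP [p pth ->]; elim: p x pth => //= z p IH x.
by case/andP=> exz pth Px; apply: IH pth _; exact: H exz Px.
Qed.

Section Tree.
Variables (n d : nat) (M : {set 'I_n} -> bgraph n d) (tau : {set 'I_n})
  (pr : 'I_d -> 'I_n * 'I_n).
Hypothesis Htau : #|tau| = d.+1.
Hypothesis Hpm : forall z, z \in tau -> perfect_matching (tau :\ z) (M (tau :\ z)).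
Hypothesis Hpr : forall r, [/\ (pr r).1 \in tau, (pr r).2 \in tau,
  (pr r).1 != (pr r).2 &
  off_node r (M (tau :\ (pr r).1)) = off_node r (M (tau :\ (pr r).2))].

Definition adj : rel 'I_n := fun u v =>
  [exists r, (pr r == (u, v)) || (pr r == (v, u))].
Definition adjr (r : 'I_d) : rel 'I_n := fun u v =>
  [exists r', (r' != r) && ((pr r' == (u, v)) || (pr r' == (v, u)))].
Definition closed (Z : {set 'I_n}) := forall r, ((pr r).1 \in Z) = ((pr r).2 \in Z).
Definition labels (Z : {set 'I_n}) := [set r | (pr r).1 \in Z].
Definition comp z0 := [set v | connect adj z0 v].

Lemma pair_edge_gen r u v : u \in tau -> v \in tau -> u != v ->
  off_node r (M (tau :\ u)) = off_node r (M (tau :\ v)) -> (v, r) \in M (tau :\ u).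
Proof.
move=> ut vt uv Eo.
have [r0 h] : exists r0, (v, r0) \in M (tau :\ u).
  by apply: (pm_lex (Hpm ut)); rewrite !inE eq_sym uv.
case: (eqVneq r0 r) => [<- //|nr].
have : (v, r0) \in off_node r (M (tau :\ u)) by rewrite inE h /=.
rewrite Eo inE => /andP [h2 _].
by have := pm_in1 (Hpm vt) h2; rewrite /= !inE eqxx.
Qed.

Lemma pair_edge r : ((pr r).2, r) \in M (tau :\ (pr r).1) /\
                    ((pr r).1, r) \in M (tau :\ (pr r).2).
Proof.
case: (Hpr r) => h1 h2 h3 h4; split; first exact: pair_edge_gen.
by apply: pair_edge_gen => //; rewrite eq_sym.
Qed.

Lemma pres r w u v : (w, r) \in M (tau :\ u) -> connect (adjr r) u v ->
  (w, r) \in M (tau :\ v).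
Proof.
move=> h c; apply: (@connect_pred _ _ (fun z => (w, r) \in M (tau :\ z)) _ u v c h).
move=> a b /existsP [r' /andP [nr' hr']] ha.
have step : forall a b, off_node r' (M (tau :\ a)) = off_node r' (M (tau :\ b)) ->
    (w, r) \in M (tau :\ a) -> (w, r) \in M (tau :\ b).
  move=> a' b' Eo h'; have : (w, r) \in off_node r' (M (tau :\ a')).
    by rewrite inE h' /= eq_sym.
  by rewrite Eo inE => /andP [].
case: (Hpr r') => _ _ _ Eo.
case/orP: hr' => /eqP e; rewrite e /= in Eo.
  exact: step Eo ha.
exact: step (esym Eo) ha.
Qed.

Lemma split_conn r v : connect adj (pr r).1 v ->
  connect (adjr r) (pr r).1 v || connect (adjr r) (pr r).2 v.
Proof.
move=> c; apply: (@connect_pred _ _ (fun z => connect (adjr r) (pr r).1 z || connect (adjr r) (pr r).2 z) _ _ _ c); last by rewrite connect0.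
move=> a b /existsP [r0 hr0] /orP [] ca.
- case: (eqVneq r0 r) => [e|ne].
    subst r0; case/orP: hr0 => /eqP ->; by rewrite /= connect0 ?orbT.
  apply/orP; left; apply: connect_trans ca (connect1 _).
  by apply/existsP; exists r0; rewrite ne.
- case: (eqVneq r0 r) => [e|ne].
    subst r0; case/orP: hr0 => /eqP ->; by rewrite /= connect0 ?orbT.
  apply/orP; right; apply: connect_trans ca (connect1 _).
  by apply/existsP; exists r0; rewrite ne.
Qed.

Lemma adj_sym : symmetric adj.
Proof. by move=> u v; apply/existsP/existsP => [] [r h]; exists r; rewrite orbC. Qed.

Lemma conn_sym u v : connect adj u v -> connect adj v u.
Proof. by rewrite (sym_connect_sym adj_sym). Qed.

Lemma adj_pair r : adj (pr r).1 (pr r).2.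
Proof. by apply/existsP; exists r; rewrite -surjective_pairing eqxx. Qed.

Lemma closed_comp z0 : closed (comp z0).
Proof.
move=> r; rewrite !inE; apply/idP/idP => h; apply: connect_trans h (connect1 _).
  exact: adj_pair.
by rewrite adj_sym adj_pair.
Qed.

Lemma comp_sub Z z0 : closed Z -> z0 \in Z -> comp z0 \subset Z.
Proof.
move=> cZ z0Z; apply/subsetP => v; rewrite inE => c.
apply: (@connect_pred _ _ (mem Z) _ _ _ c z0Z) => a b /existsP [r /orP [] /eqP e] ha.
  by move: (cZ r); rewrite e /= -[a \in Z]/(mem Z a) ha => <-.
by move: (cZ r); rewrite e /= -[a \in Z]/(mem Z a) ha => ->.
Qed.

Lemma lab_edge z0 r : z0 \in tau -> connect adj z0 (pr r).1 ->
  exists2 w, (w == (pr r).1) || (w == (pr r).2) & (w, r) \in M (tau :\ z0).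
Proof.
move=> z0t c; have c' := conn_sym c.
case/orP: (split_conn c') => hc.
  by exists (pr r).2; [rewrite eqxx orbT | exact: pres (pair_edge r).1 hc].
by exists (pr r).1; [rewrite eqxx | exact: pres (pair_edge r).2 hc].
Qed.

Lemma comp_bound z0 : z0 \in tau -> #|labels (comp z0)| < #|comp z0|.
Proof.
move=> z0t.
set K := comp z0.
set E' := [set e in M (tau :\ z0) | e.2 \in labels K].
have H1 : labels K \subset [set e.2 | e in E'].
  apply/subsetP => r hr; have := hr; rewrite /K !inE => c.
  have [w _ hw] := lab_edge z0t c.
  by apply/imsetP; exists (w, r) => //; rewrite inE hw.
have H2 : [set e.1 | e in E'] \subset K :\ z0.
  apply/subsetP => l /imsetP [[l0 r]]; rewrite inE => /andP [he hr] -> /=.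
  have := hr; rewrite /K !inE => c.
  have [w hw1 hw] := lab_edge z0t c.
  have e0 := pm_runiq (Hpm z0t) he hw.
  have := pm_in1 (Hpm z0t) he; rewrite /= !inE => /andP [-> _] /=.
  rewrite e0; case/orP: hw1 => /eqP ->; first by [].
  by move: (closed_comp z0 r); rewrite !inE c => <-.
have H3 : {in E' &, injective (fun e : 'I_n * 'I_d => e.1)}.
  move=> [l1 r1] [l2 r2]; rewrite !inE /= => /andP [h1 _] /andP [h2 _] e.
  subst l2; by rewrite (pm_luniq (Hpm z0t) h1 h2).
have z0K : z0 \in K by rewrite inE connect0.
have := subset_leq_card H1; have := leq_imset_card (fun e : 'I_n * 'I_d => e.2) E'.
rewrite -(card_in_imset H3); have := subset_leq_card H2.
rewrite (cardsD1 z0 K) z0K add1n ltnS => h1 h2 h3.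
exact: leq_trans h3 (leq_trans h2 h1).
Qed.

Lemma labels_bound m (Z : {set 'I_n}) z0 : #|Z| <= m -> closed Z -> Z \subset tau -> z0 \in Z ->
  #|labels Z| < #|Z|.
Proof.
elim: m Z z0 => [|m IH] Z z0 hm cZ Zt z0Z.
  by move: hm; rewrite leqn0 => /eqP/cards0_eq Z0; rewrite Z0 inE in z0Z.
have KZ := comp_sub cZ z0Z.
have z0t : z0 \in tau by apply: (subsetP Zt).
case: (eqVneq (comp z0) Z) => [<-|ne]; first exact: comp_bound.
have [z1 z1Z z1K] : exists2 z1, z1 \in Z & z1 \notin comp z0.
  apply/subsetPn; apply: contra ne => h; by rewrite eqEsubset KZ h.
set Z' := Z :\: comp z0.
have cZ' : closed Z' by move=> r; rewrite !in_setD cZ closed_comp.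
have Z't : Z' \subset tau by apply: subset_trans Zt; apply: subsetDl.
have z1Z' : z1 \in Z' by rewrite inE z1Z z1K.
have cardZ' : #|Z'| = #|Z| - #|comp z0|.
  by rewrite cardsD (setIidPr KZ).
have leK := subset_leq_card KZ.
have z0K : z0 \in comp z0 by rewrite inE connect0.
have Kpos : 0 < #|comp z0| by apply/card_gt0P; exists z0.
have hZ' : #|Z'| <= m by lia.
have IH' := IH Z' z1 hZ' cZ' Z't z1Z'.
have hK := comp_bound z0t.
have sub : labels Z \subset labels (comp z0) :|: labels Z'.
  apply/subsetP => r; rewrite !inE => h; rewrite h andbT.
  by case: connect.
have := subset_leq_card sub; have := leq_card_setU (labels (comp z0)) (labels Z').
move=> [hU _]; lia.
Qed.

Lemma closed_tau : closed tau.
Proof. by move=> r; case: (Hpr r) => -> -> _ _. Qed.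

Lemma connected z0 v : z0 \in tau -> v \in tau -> connect adj z0 v.
Proof.
move=> z0t vt; apply/negPn/negP => nc.
have KZ := comp_sub closed_tau z0t.
set Z' := tau :\: comp z0.
have cZ' : closed Z' by move=> r; rewrite !in_setD closed_tau closed_comp.
have Z't : Z' \subset tau by apply: subsetDl.
have vZ' : v \in Z' by rewrite !inE vt nc.
have cardZ' : #|Z'| = #|tau| - #|comp z0|.
  by rewrite cardsD (setIidPr KZ).
have leK := subset_leq_card KZ.
have hZ' := labels_bound (leqnn _) cZ' Z't vZ'.
have hK := comp_bound z0t.
have sub : labels tau \subset labels (comp z0) :|: labels Z'.
  apply/subsetP => r; rewrite !inE => h; rewrite h andbT.
  by case: connect.
have lt : labels tau = setT by apply/setP => r; rewrite !inE; case: (Hpr r).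
have := subset_leq_card sub; rewrite lt cardsT card_ord.
have := leq_card_setU (labels (comp z0)) (labels Z').
move=> [hU _]; lia.
Qed.

Lemma endpoint a z : z \in tau ->
  ((pr a).2, a) \in M (tau :\ z) \/ ((pr a).1, a) \in M (tau :\ z).
Proof.
move=> zt; case: (Hpr a) => p1 _ _ _.
case/orP: (split_conn (connected p1 zt)) => hc.
  by left; exact: pres (pair_edge a).1 hc.
by right; exact: pres (pair_edge a).2 hc.
Qed.

Lemma key_tau x y s a : y \in tau -> s \in tau ->
  (x, a) \in M (tau :\ y) -> (y, a) \in M (tau :\ s) -> (y, a) \in M (tau :\ x).
Proof.
move=> yt st h1 h2.
have := pm_in1 (Hpm yt) h1; rewrite /= !inE => /andP [xy xt].
have Ex : x = (pr a).2 \/ x = (pr a).1.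
  by case: (endpoint a yt) => h; [left|right]; apply: (pm_runiq (Hpm yt) h1 h).
have Ey : y = (pr a).2 \/ y = (pr a).1.
  by case: (endpoint a st) => h; [left|right]; apply: (pm_runiq (Hpm st) h2 h).
move: xy; case: Ex Ey => -> [] ->; rewrite ?eqxx //= => _.
  exact: (pair_edge a).2.
exact: (pair_edge a).1.
Qed.

End Tree.

Lemma key_tau_full n d (M : {set 'I_n} -> bgraph n d) :
  linkage_matching_field M -> forall tau : {set 'I_n}, #|tau| = d.+1 ->
  forall x y s a, y \in tau -> s \in tau ->
  (x, a) \in M (tau :\ y) -> (y, a) \in M (tau :\ s) -> (y, a) \in M (tau :\ x).
Proof.
move=> [Hmf Hlk] tau Htau.
have Hpm : forall z, z \in tau -> perfect_matching (tau :\ z) (M (tau :\ z)).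
  move=> z zt; apply: Hmf; move: Htau; rewrite (cardsD1 z) zt; lia.
have : forall r : 'I_d, exists pq : 'I_n * 'I_n, [/\ pq.1 \in tau, pq.2 \in tau,
  pq.1 != pq.2 & off_node r (M (tau :\ pq.1)) = off_node r (M (tau :\ pq.2))].
  move=> r; have [l [l' [h1 h2 h3 h4]]] := Hlk r tau Htau.
  by exists (l, l').
case/fin_all_exists => pr Hpr.
move=> x y s a; exact: (key_tau Htau Hpm Hpr).
Qed.

Lemma setU1D1 (T : finType) (l s : T) (A : {set T}) :
  l != s -> l |: A :\ s = (l |: A) :\ s.
Proof.
move=> ls; apply/setP => w; rewrite !inE.
case: (eqVneq w l) => [->|_]; first by rewrite ls.
by [].
Qed.

Lemma phi_lt n d (M : {set 'I_n} -> bgraph n d) :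
  linkage_matching_field M -> forall (sigma : {set 'I_n}) x s (a : 'I_d), #|sigma| = d ->
  x \in sigma -> s \in sigma -> x != s -> (x, a) \in M sigma ->
  phi M (s |: ~: sigma) a < phi M (x |: ~: sigma) a.
Proof.
move=> HM sigma x s a hs xs ss nxs hxa.
have pmS : perfect_matching sigma (M sigma) := HM.1 sigma hs.
have compl : forall z, ~: (z |: ~: sigma) = sigma :\ z.
  by move=> z; apply/setP => w; rewrite !inE negb_or negbK.
rewrite /phi /right_degree; apply: proper_card; apply/properP; split.
  apply/subsetP => l; rewrite !inE /= !compl => /andP [hl hm].
  case/orP: hl => [/eqP el|nls].
    subst l; move: hm; rewrite setD1K // => hm.
    by have := pm_runiq pmS hm hxa => e; rewrite e eqxx in nxs.
  have lx : l != x by apply: contraNneq nls => ->.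
  have ls : l != s by apply: contraNneq nls => ->.
  set tau := l |: sigma.
  have htau : #|tau| = d.+1 by rewrite cardsU1 nls hs.
  have e1 : tau :\ l = sigma by rewrite setU1K.
  have := @key_tau_full n d M HM tau htau x l s a.
  rewrite e1 -!setU1D1 // !inE eqxx ss orbT => /(_ isT isT hxa hm) ->.
  by rewrite nls orbT.
exists x; first by rewrite !inE eqxx /= compl setD1K.
by rewrite !inE (negbTE nxs) xs.
Qed.

Lemma incl n d (M M' : {set 'I_n} -> bgraph n d) :
  linkage_matching_field M -> linkage_matching_field M' ->
  (forall rho : {set 'I_n}, #|rho| = n - d + 1 -> forall r : 'I_d,
      phi M rho r = phi M' rho r) ->
  forall sigma : {set 'I_n}, #|sigma| = d -> M sigma \subset M' sigma.
Proof.
move=> HM HM' Hphi sigma hs; apply/subsetP => -[x a] h.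
have pm : perfect_matching sigma (M sigma) := HM.1 sigma hs.
have pm' : perfect_matching sigma (M' sigma) := HM'.1 sigma hs.
have xs : x \in sigma := pm_in1 pm h.
have [b hb] := pm_lex pm' xs.
case: (eqVneq b a) => [<- //|nba].
have [s hsb] := pm_rex b pm.
have ss : s \in sigma := pm_in1 pm hsb.
have nsx : s != x.
  apply/eqP => e; subst s; have e := pm_luniq pm h hsb.
  by rewrite e eqxx in nba.
have h1 := phi_lt HM hs ss xs nsx hsb.
have h2 := phi_lt HM' hs xs ss (introN eqP (fun e => (elimN eqP nsx) (esym e))) hb.
have hcard : forall z, z \in sigma -> #|z |: ~: sigma| = n - d + 1.
  move=> z zs; rewrite cardsU1 (_ : z \notin ~: sigma = true) /=; last by rewrite inE negbK.
  have := cardsC sigma; rewrite card_ord hs => e; by rewrite -[X in _ = X - d + 1]e addKn addnC.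
rewrite (Hphi _ (hcard _ xs)) (Hphi _ (hcard _ ss)) in h1.
by move: (ltn_trans h1 h2); rewrite ltnn.
Qed.

Theorem theorem3p29 (n d : nat) (M M' : {set 'I_n} -> bgraph n d) :
  d <= n ->
  linkage_matching_field M -> linkage_matching_field M' ->
  (forall rho : {set 'I_n}, #|rho| = n - d + 1 -> forall r : 'I_d,
      phi M rho r = phi M' rho r) ->
  forall sigma : {set 'I_n}, #|sigma| = d -> M sigma = M' sigma.
Proof.
move=> _ HM HM' Hphi sigma hs; apply/eqP; rewrite eqEsubset.
rewrite (incl HM HM' Hphi hs) /=.
apply: (incl HM' HM _ hs) => rho hr r; exact: esym (Hphi rho hr r).
Qed.
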